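(* Let $(A,[\cdot,\cdot])$ be an anticommutative algebra over a field $\mathbb K$ of characteristic $0$, i.e. $[x,y]=-[y,x]$ for all $x,y\in A$. Then $A$ is an Acaa-algebra if and only if $[x_1,[x_2,x_1]]=0$ for all $x_1,x_2\in A$.
   Context: An Acaa-algebra over a field $\mathbb K$ of characteristic $0$ is a $\mathbb K$-vector space $A$ with a bilinear product $[\cdot,\cdot]$ which is anticommutative, $[x,y]=-[y,x]$, and satisfies $[x_1,[x_2,x_3]]=[x_2,[x_3,x_1]]$ for all $x_1,x_2,x_3\in A$. *)

(* Defs.v *)
From mathcomp Require Import all_boot all_order all_algebra.
Set Implicit Arguments. Unset Strict Implicit. Unset Printing Implicit Defensive.
Import GRing.Theory.
Local Open Scope ring_scope.

Definition bilinear_prod (K : fieldType) (A : lmodType K) (br : A -> A -> A) :=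
  (forall a x y z, br (a *: x + y) z = a *: br x z + br y z) /\
  (forall a x y z, br x (a *: y + z) = a *: br x y + br x z).

Definition anticommutative (K : fieldType) (A : lmodType K) (br : A -> A -> A) :=
  forall x y, br x y = - br y x.

Definition is_Acaa (K : fieldType) (A : lmodType K) (br : A -> A -> A) :=
  anticommutative br /\ forall x1 x2 x3, br x1 (br x2 x3) = br x2 (br x3 x1).

(* Main.v *)
Require Import Defs.
From mathcomp Require Import all_boot all_order all_algebra.
Local Open Scope ring_scope.
Import GRing.Theory.

Theorem mainTheorem1 (K : fieldType) (hK : [pchar K] =i pred0)
  (A : lmodType K) (br : A -> A -> A)
  (hbil : bilinear_prod br) (hanti : anticommutative br) :
  is_Acaa br <-> (forall x1 x2 : A, br x1 (br x2 x1) = 0).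
Proof.
have [hl hr] := hbil.
have addl : forall x y z, br (x + y) z = br x z + br y z.
  by move=> x y z; rewrite -[x in LHS]scale1r hl scale1r.
have addr : forall x y z, br x (y + z) = br x y + br x z.
  by move=> x y z; rewrite -[y in LHS]scale1r hr scale1r.
have br0 : forall x, br x 0 = 0.
  move=> x; have h := addr x 0 0; rewrite addr0 in h.
  by apply: (addrI (br x 0)); rewrite addr0 -h.
have brxx : forall x, br x x = 0.
  move=> x; have h := hanti x x.
  have h2 : (2%:R : K) *: br x x = 0.
    by rewrite scaler_nat mulr2n {1}h addNr.
  have n2 : (2%:R : K) != 0 by rewrite ((pcharf0P K).1 hK).
  by rewrite -[br x x]scale1r -(mulVf n2) -scalerA h2 scaler0.
split.
  move=> [_ H] x y; by rewrite H brxx br0.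
move=> H; split => // x1 x2 x3.
have lin : forall x y z, br x (br y z) = br z (br x y).
  move=> x y z; have := H (x + z) y.
  rewrite addr !addl !addr (H x y) (H z y) add0r addr0 => /eqP; rewrite addr_eq0 => /eqP ->.
  rewrite (hanti y x).
  have oppR : forall u v, br u (- v) = - br u v.
    move=> u v; by rewrite -scaleN1r -[(-1) *: v]addr0 hr br0 addr0 scaleN1r.
  by rewrite oppR opprK.
by rewrite lin lin.
Qed.
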